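(* Let $d\geqslant1$ and let $u_1,\dots,u_d\in\mathbb{Z}^d$ satisfy no nontrivial $\mathbb{Z}$-linear relation. No periodic subset of $\mathbb{Z}^d$ with periods $u_1,\dots,u_d$ has a minimal complement in $\mathbb{Z}^d$.
   Context: $\mathbb{N}=\{0,1,2,\dots\}$, $P=\mathbb{N}u_1+\dots+\mathbb{N}u_d$. A nonempty $X\subseteq\mathbb{Z}^d$ is periodic with periods $u_1,\dots,u_d$ if $X\subseteq F+P$ for some nonempty finite $F\subseteq\mathbb{Z}^d$ and $x+P\subseteq X$ for every $x\in X$. A nonempty $M\subseteq\mathbb{Z}^d$ is a complement of $W$ if $M+W=\mathbb{Z}^d$, and a minimal complement if no proper subset of $M$ is a complement of $W$. *)

(* Defs.v *)
From mathcomp Require Import all_boot all_order all_algebra.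
Set Implicit Arguments. Unset Strict Implicit. Unset Printing Implicit Defensive.
Import Order.TTheory GRing.Theory Num.Theory.
Local Open Scope ring_scope.

Definition Zd (d : nat) := 'rV[int]_d.

Definition cone (d : nat) (u : 'I_d -> Zd d) (p : Zd d) : Prop :=
  exists n : 'I_d -> nat, p = \sum_(i < d) ((n i)%:Z *: u i).

Definition Z_independent (d : nat) (u : 'I_d -> Zd d) : Prop :=
  forall c : 'I_d -> int, \sum_(i < d) (c i *: u i) = 0 -> forall i, c i = 0.

Definition periodic (d : nat) (u : 'I_d -> Zd d) (X : Zd d -> Prop) : Prop :=
  [/\ (exists x, X x),
      (exists F : seq (Zd d), F != [::] /\
         forall x, X x -> exists f p, [/\ f \in F, cone u p & x = f + p])
    & forall x p, X x -> cone u p -> X (x + p)].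

Definition is_complement (d : nat) (M W : Zd d -> Prop) : Prop :=
  (exists m, M m) /\ forall z, exists m w, [/\ M m, W w & z = m + w].

Definition minimal_complement (d : nat) (M W : Zd d -> Prop) : Prop :=
  is_complement M W /\
  forall M' : Zd d -> Prop, (forall x, M' x -> M x) -> (exists x, M x /\ ~ M' x) ->
    ~ is_complement M' W.

(* Main.v *)
Require Import Defs.
From mathcomp Require Import all_boot all_order all_algebra.
From mathcomp Require Import zify.
From Stdlib Require Import Classical.
Set Implicit Arguments. Unset Strict Implicit. Unset Printing Implicit Defensive.
Import Order.TTheory GRing.Theory Num.Theory.
Local Open Scope ring_scope.

Lemma witness (d : nat) (u : 'I_d -> Zd d) (X : Zd d -> Prop) (M : Zd d -> Prop) :
  (forall x p, X x -> cone u p -> X (x + p)) ->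
  minimal_complement M X -> exists x0, forall p, cone u p -> X (x0 - p).
Proof.
move=> Xup [[[m0 Mm0] cov] minim].
pose M' := fun x => M x /\ x <> m0.
have nc : ~ is_complement M' X.
  apply: minim; first by move=> x [].
  by exists m0; split => // -[_ ]; apply.
have eq0 : forall m, M m -> ~ M' m -> m = m0.
  move=> m Mm nM; apply: NNPP => ne; apply: nM; by split.
case: (classic (exists m, M' m)) => [ne|e].
- have : ~ forall z, exists m w, [/\ M' m, X w & z = m + w].
    by move=> h; apply: nc; split.
  move/not_all_ex_not => [z0 nz0].
  exists (z0 - m0) => p cp.
  have [m [w [Mm Xw E]]] := cov (z0 - p).
  have mE : m = m0.
    apply: eq0 => // M'm; apply: nz0; exists m, (w + p); split => //.
      exact: Xup.
    by rewrite addrA -E subrK.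
  subst m.
  have -> : z0 - m0 - p = w by rewrite addrAC E addrC addKr.
  done.
- exists 0 => p _.
  have [m [w [Mm Xw E]]] := cov (m0 + (0 - p)).
  have mE : m = m0 by apply: eq0 => // h; apply: e; exists m.
  subst m. by move/addrI: E => ->.
Qed.

Lemma bound1 (d : nat) (hd : (0 < d)%N) (u : 'I_d -> Zd d) (x0 f : Zd d) :
  Z_independent u ->
  exists B : nat, forall k (n : 'I_d -> nat),
    x0 - f = \sum_(i < d) ((n i + k)%N%:Z *: u i) -> (k <= B)%N.
Proof.
move=> ind.
case: (classic (exists k (n : 'I_d -> nat), x0 - f = \sum_(i < d) ((n i + k)%N%:Z *: u i))).
- move=> [k0 [n0 E0]].
  pose i0 : 'I_d := Ordinal hd.
  exists (n0 i0 + k0)%N => k n E.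
  have : \sum_(i < d) (((n i + k)%N%:Z - (n0 i + k0)%N%:Z) *: u i) = 0.
    under eq_bigr => i _ do rewrite scalerBl.
    by rewrite sumrB -E -E0 subrr.
  move/ind/(_ i0)/eqP; rewrite subr_eq0 => /eqP [] ; lia.
- move=> ne; exists 0%N => k n E; exfalso; apply: ne; by exists k, n.
Qed.

Lemma boundF (d : nat) (hd : (0 < d)%N) (u : 'I_d -> Zd d) (x0 : Zd d) :
  Z_independent u -> forall F : seq (Zd d),
  exists B : nat, forall f, f \in F -> forall k (n : 'I_d -> nat),
    x0 - f = \sum_(i < d) ((n i + k)%N%:Z *: u i) -> (k <= B)%N.
Proof.
move=> ind; elim => [|f F [B IH]].
  by exists 0%N.
have [B1 H1] := @bound1 _ hd _ x0 f ind.
exists (maxn B B1) => g; rewrite inE => /orP [/eqP ->|gF] k n E.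
  by rewrite leq_max (H1 k n E) orbT.
by rewrite leq_max (IH g gF k n E).
Qed.

Theorem corollary4p11 (d : nat) (hd : (1 <= d)%N) (u : 'I_d -> Zd d) :
  Z_independent u ->
  forall X : Zd d -> Prop, periodic u X -> ~ (exists M : Zd d -> Prop, minimal_complement M X).
Proof.
move=> ind X [_ [F [_ HF]] Xup] [M mc].
have [x0 Hx0] := witness Xup mc.
have [B HB] := @boundF _ hd _ x0 ind F.
pose k := B.+1.
have cp : cone u (\sum_(i < d) (k%:Z *: u i)) by exists (fun _ => k).
have [f [p [fF [n En] E]]] := HF _ (Hx0 _ cp).
have E' : x0 - f = \sum_(i < d) ((n i + k)%N%:Z *: u i).
  under eq_bigr => i _ do rewrite PoszD scalerDl.
  rewrite big_split /= -En.
  apply/eqP; rewrite subr_eq; apply/eqP.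
  by rewrite -[x0](subrK (\sum_(i < d) k%:Z *: u i)) E [RHS]addrC addrA.
have := HB f fF k n E'; by rewrite ltnn.
Qed.
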